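(* Let $\Phi$ be a channel matrix whose rows $P^1,\dots,P^4\in\Delta^n$ are in general position, let $Q^0$ be the equidistant point from $P^1,\dots,P^4$ with barycentric coordinate $\boldsymbol\lambda^0$, and suppose $\lambda^0_1<0$, $\lambda^0_2<0$, $\lambda^0_3\ge0$, $\lambda^0_4\ge0$. Let $Q^{1(1)}=\pi(Q^0|L(P^2,P^3,P^4))$ and $Q^{1(2)}=\pi(Q^0|L(P^1,P^3,P^4))$ with barycentric coordinates $\boldsymbol\lambda^{1(1)},\boldsymbol\lambda^{1(2)}$ about $P^1,\dots,P^4$, and suppose $\lambda^{1(2)}_1<0$. If moreover $\lambda^{1(1)}_2,\lambda^{1(1)}_3,\lambda^{1(1)}_4\ge0$, then the output distribution achieving the channel capacity is $Q^\ast=Q^{1(1)}$ and the channel capacity is $C=D(P^2\|Q^{1(1)})$.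
   Context: $\Delta^n=\{Q:Q_j>0,\sum_jQ_j=1\}$, $\bar\Delta^m=\{\boldsymbol\lambda:\lambda_i\ge0,\sum_i\lambda_i=1\}$; $D(Q\|Q')=\sum_jQ_j\log(Q_j/Q'_j)$. Rows are in general position if $P^2-P^1,\dots,P^m-P^1$ are linearly independent. $L(S^1,\dots,S^r)=\{\sum_i\lambda_iS^i:\sum_i\lambda_i=1\}\cap\Delta^n$; for such an affine subspace $L$, $\pi(Q'|L)$ is the unique $Q\in L$ minimizing $D(Q\|Q')$. The barycentric coordinate of $Q\in L(P^1,\dots,P^m)$ is the unique $\boldsymbol\lambda$ with $\sum_i\lambda_i=1$, $Q=\sum_i\lambda_iP^i$. The equidistant point is the unique $Q^0\in L(P^1,\dots,P^m)$ with all $D(P^i\|Q^0)$ equal. Mutual information $I(\boldsymbol\lambda,\Phi)=\sum_{i,j}\lambda_iP^i_j\log(P^i_j/Q_j)$ with $Q=\boldsymbol\lambda\Phi$; capacity $C=\max_{\boldsymbol\lambda\in\bar\Delta^m}I(\boldsymbol\lambda,\Phi)$; the capacity-achieving output distribution is $Q^\ast=\boldsymbol\lambda^\ast\Phi$ for a maximizer $\boldsymbol\lambda^\ast$ (unique). *)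

(* Defs.v *)
From mathcomp Require Import all_boot all_order all_algebra.
From mathcomp Require Import all_classical all_reals all_analysis.
Set Implicit Arguments. Unset Strict Implicit. Unset Printing Implicit Defensive.
Import Order.TTheory GRing.Theory Num.Theory.
Local Open Scope ring_scope.

Section Defs.
Variable R : realType.

Definition i1 : 'I_4 := @Ordinal 4 0 isT.
Definition i2 : 'I_4 := @Ordinal 4 1 isT.
Definition i3 : 'I_4 := @Ordinal 4 2 isT.
Definition i4 : 'I_4 := @Ordinal 4 3 isT.

Definition in_simplex n (Q : 'I_n -> R) : Prop :=
  (forall j, 0 < Q j) /\ \sum_j Q j = 1.

Definition in_csimplex m (l : 'I_m -> R) : Prop :=
  (forall i, 0 <= l i) /\ \sum_i l i = 1.

Definition KL n (Q Q' : 'I_n -> R) : R := \sum_j Q j * ln (Q j / Q' j).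

Definition general_position m n (P : 'I_m.+1 -> 'I_n -> R) : Prop :=
  forall a : 'I_m -> R,
    (forall j, \sum_(k < m) a k * (P (lift ord0 k) j - P ord0 j) = 0) ->
    forall k, a k = 0.

Definition comb m n (P : 'I_m -> 'I_n -> R) (l : 'I_m -> R) : 'I_n -> R :=
  fun j => \sum_i l i * P i j.

Definition Laff m n (P : 'I_m -> 'I_n -> R) (A : {set 'I_m}) (Q : 'I_n -> R) : Prop :=
  in_simplex Q /\
  exists l : 'I_m -> R, (forall i, i \notin A -> l i = 0) /\ \sum_i l i = 1 /\
     (forall j, Q j = comb P l j).

Definition is_proj n (L : ('I_n -> R) -> Prop) (Q' Q : 'I_n -> R) : Prop :=
  L Q /\ forall Q'', L Q'' -> KL Q Q' <= KL Q'' Q'.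

Definition barycentric m n (P : 'I_m -> 'I_n -> R) (Q : 'I_n -> R) (l : 'I_m -> R) : Prop :=
  \sum_i l i = 1 /\ forall j, Q j = comb P l j.

Definition equidistant m n (P : 'I_m -> 'I_n -> R) (Q0 : 'I_n -> R) : Prop :=
  Laff P [set: 'I_m]%SET Q0 /\ forall i k, KL (P i) Q0 = KL (P k) Q0.

Definition mutinf m n (P : 'I_m -> 'I_n -> R) (l : 'I_m -> R) : R :=
  \sum_i \sum_j l i * P i j * ln (P i j / comb P l j).

Definition capacity_achieving m n (P : 'I_m -> 'I_n -> R) (l : 'I_m -> R) : Prop :=
  in_csimplex l /\ forall mu, in_csimplex mu -> mutinf P mu <= mutinf P l.

End Defs.

(* Main.v *)
Require Import Defs.
From mathcomp Require Import all_boot all_order all_algebra.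
From mathcomp Require Import all_classical all_reals all_analysis.
From mathcomp Require Import ring lra.
Import Order.TTheory GRing.Theory Num.Theory.
Local Open Scope ring_scope.
Set Implicit Arguments. Unset Strict Implicit.

Lemma ln_le_sub1 (R : realType) (x : R) : 0 < x -> ln x <= x - 1.
Proof.
move=> x0; rewrite -ler_expR lnK ?posrE //.
by have := expR_ge1Dx (x - 1); rewrite addrC subrK.
Qed.

Lemma ln_lt_sub1 (R : realType) (x : R) : 0 < x -> x != 1 -> ln x < x - 1.
Proof.
move=> x0 x1; rewrite -ltr_expR lnK ?posrE //.
have := @expR_gt1Dx R (x - 1); rewrite (_ : 1 + (x - 1) = x); last by ring.
apply.
by rewrite subr_eq0.
Qed.

Lemma KL_lnE (R : realType) n (Q Q' : 'I_n -> R) :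
  (forall j, 0 < Q j) -> (forall j, 0 < Q' j) ->
  KL Q Q' = \sum_j Q j * (ln (Q j) - ln (Q' j)).
Proof.
move=> HQ HQ'; apply: eq_bigr => j _; by rewrite ln_div ?posrE.
Qed.

Lemma gibbs_term (R : realType) (q q' : R) : 0 < q -> 0 < q' ->
  q * (ln q' - ln q) <= q' - q.
Proof.
move=> q0 q'0; rewrite -ln_div ?posrE //.
have := @ln_le_sub1 R _ (divr_gt0 q'0 q0).
move=> h; rewrite -[leRHS](_ : q * (q' / q - 1) = _); first by rewrite ler_pM2l.
by field; rewrite gt_eqF.
Qed.

Lemma gibbs_term_lt (R : realType) (q q' : R) : 0 < q -> 0 < q' -> q != q' ->
  q * (ln q' - ln q) < q' - q.
Proof.
move=> q0 q'0 qq; rewrite -ln_div ?posrE //.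
have := @ln_lt_sub1 R _ (divr_gt0 q'0 q0).
move=> h; rewrite -[ltRHS](_ : q * (q' / q - 1) = _); last first.
  by field; rewrite gt_eqF.
rewrite ltr_pM2l //; apply: h.
apply/negP => /eqP h1.
have e : q' = q' / q * q by rewrite mulfVK // gt_eqF.
by rewrite h1 mul1r in e; rewrite e eqxx in qq.
Qed.

Lemma gibbs (R : realType) n (Q Q' : 'I_n -> R) :
  (forall j, 0 < Q j) -> (forall j, 0 < Q' j) -> \sum_j Q j = \sum_j Q' j ->
  0 <= \sum_j Q j * (ln (Q j) - ln (Q' j)).
Proof.
move=> HQ HQ' Hs.
have : \sum_j Q j * (ln (Q' j) - ln (Q j)) <= \sum_j (Q' j - Q j).
  by apply: ler_sum => j _; apply: gibbs_term.
rewrite sumrB Hs subrr => h.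
rewrite -oppr_le0 -sumrN; apply: le_trans h; apply: ler_sum => j _.
by rewrite -mulrN opprB.
Qed.

Lemma gibbs_eq (R : realType) n (Q Q' : 'I_n -> R) :
  (forall j, 0 < Q j) -> (forall j, 0 < Q' j) -> \sum_j Q j = \sum_j Q' j ->
  \sum_j Q j * (ln (Q j) - ln (Q' j)) <= 0 -> forall j, Q j = Q' j.
Proof.
move=> HQ HQ' Hs H k; apply/eqP; apply/negPn/negP => Hk.
have : \sum_j Q j * (ln (Q' j) - ln (Q j)) < \sum_j (Q' j - Q j).
  rewrite (bigD1 k) //= [ltRHS](bigD1 k) //=.
  apply: ltr_leD; first exact: gibbs_term_lt.
  by apply: ler_sum => j _; apply: gibbs_term.
rewrite sumrB Hs subrr => h.
have : 0 < \sum_j Q j * (ln (Q j) - ln (Q' j)).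
  rewrite -oppr_lt0 -sumrN; apply: le_lt_trans h; apply: ler_sum => j _.
  by rewrite -mulrN opprB.
by rewrite ltNge H.
Qed.

Lemma small_pos (R : realType) (a M w : R) : 0 < w -> 0 <= M ->
  (forall t, 0 < t < w -> a <= t * M) -> a <= 0.
Proof.
move=> w0 M0 H; rewrite leNgt; apply/negP => a0.
set t := Num.min (w / 2) (a / (M + 1)).
have t0 : 0 < t by rewrite lt_min divr_gt0 //= divr_gt0 // ltr_pwDr.
have tw : t < w by rewrite gt_min ltr_pdivrMr //; lra.
have ta : t <= a / (M + 1) by rewrite ge_min lexx orbT.
have := H t; rewrite t0 tw => /(_ isT).
rewrite ler_pdivlMr ?ltr_pwDr // in ta.
move=> h; nra.
Qed.

Lemma simplex_le1 (R : realType) n (Q : 'I_n -> R) j : in_simplex Q -> Q j <= 1.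
Proof.
move=> [Hp Hs]; rewrite -Hs (bigD1 j) //= lerDl sumr_ge0 // => x _.
exact: ltW.
Qed.

Lemma term_bound (R : realType) (q11 q0 qt : R) : 0 < q11 -> 0 < q0 -> 0 < qt ->
  qt * (ln qt - ln q0) <= q11 * (ln q11 - ln q0) + (qt - q11) * (ln q11 - ln q0)
     + (qt - q11) + (qt - q11) ^+ 2 / q11.
Proof.
move=> h11 h0 ht.
have e : qt * (ln qt - ln q0) = qt * (ln q11 - ln q0) + qt * (ln (qt / q11)).
  by rewrite ln_div ?posrE //; ring.
rewrite e.
have := @ln_le_sub1 R _ (divr_gt0 ht h11) => hl.
have : qt * ln (qt / q11) <= qt * (qt / q11 - 1) by rewrite ler_pM2l.
have -> : qt * (qt / q11 - 1) = (qt - q11) + (qt - q11) ^+ 2 / q11.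
  by field; rewrite gt_eqF.
move=> h; lra.
Qed.

Lemma sum_delta (R : realType) m (F : 'I_m -> R) i :
  \sum_x (x == i)%:R * F x = F i.
Proof.
rewrite (bigD1 i) //= eqxx mul1r big1 ?addr0 // => x /negbTE ->.
by rewrite mul0r.
Qed.

Lemma first_order (R : realType) m n (P : 'I_m -> 'I_n -> R) (A : {set 'I_m})
  (Q0 Q11 : 'I_n -> R) i k :
  (forall i, in_simplex (P i)) -> in_simplex Q0 -> is_proj (Laff P A) Q0 Q11 ->
  i \in A -> k \in A ->
  0 <= \sum_j (P i j - P k j) * (ln (Q11 j) - ln (Q0 j)).
Proof.
move=> HP [HQ0 HQ0s] [[[HQ HQs] [l [lA [ls lc]]]] Hmin] iA kA.
set d := fun j => P i j - P k j.
set g := fun j => ln (Q11 j) - ln (Q0 j).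
set w := \prod_j Q11 j.
have w0 : 0 < w by apply: prodr_gt0 => j _.
have wle : forall j, w <= Q11 j.
  move=> j; rewrite /w (bigD1 j) //=; apply: ler_piMr; first exact: ltW.
  apply: prodr_ile1 => x _; rewrite ltW //=; exact: simplex_le1.
have dgt : forall j, -1 < d j.
  move=> j; rewrite /d; have := @simplex_le1 R n (P k) j (HP k); have := (HP i).1 j; lra.
have ds : \sum_j d j = 0.
  by rewrite /d sumrB (HP i).2 (HP k).2 subrr.
set M := \sum_j d j ^+ 2 / Q11 j.
have M0 : 0 <= M by apply: sumr_ge0 => j _; rewrite divr_ge0 ?sqr_ge0 ?ltW.
rewrite -oppr_le0; apply: (@small_pos R _ M w w0 M0) => t /andP[t0 tw].
set Qt := fun j => Q11 j + t * d j.
have Qtp : forall j, 0 < Qt j.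
  move=> j; rewrite /Qt; have := wle j; have := dgt j; nra.
have HL : Laff P A Qt.
  split; first split => //.
    by rewrite /Qt big_split /= -mulr_sumr ds mulr0 HQs addr0.
  exists (fun x => l x + t * ((x == i)%:R - (x == k)%:R)); split; [|split].
  - move=> x xA; rewrite lA //.
    have -> : (x == i) = false by apply/negP => /eqP e; move: xA; rewrite e iA.
    have -> : (x == k) = false by apply/negP => /eqP e; move: xA; rewrite e kA.
    by rewrite subrr mulr0 addr0.
  - rewrite big_split /= -mulr_sumr sumrB ls.
    have := @sum_delta R m (fun _ => 1) i; have := @sum_delta R m (fun _ => 1) k.
    under eq_bigr do rewrite mulr1. move=> ->.
    under eq_bigr do rewrite mulr1. move=> ->.
    by rewrite subrr mulr0 addr0.
  - move=> j; rewrite /Qt /comb lc /comb /d.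
    under [in RHS]eq_bigr do rewrite mulrDl.
    rewrite big_split /=; congr (_ + _).
    under eq_bigr do rewrite -mulrA mulrBl.
    rewrite -mulr_sumr sumrB sum_delta sum_delta //.
have Hle := Hmin _ HL.
rewrite (KL_lnE HQ HQ0) (KL_lnE Qtp HQ0) in Hle.
have Hub : \sum_j Qt j * (ln (Qt j) - ln (Q0 j)) <=
   \sum_j (Q11 j * g j + t * (d j * g j) + t * d j + t ^+ 2 * (d j ^+ 2 / Q11 j)).
  apply: ler_sum => j _.
  have := term_bound (HQ j) (HQ0 j) (Qtp j).
  have -> : Qt j - Q11 j = t * d j by rewrite /Qt; ring.
  move=> h; apply: (le_trans h); rewrite le_eqVlt; apply/orP; left; apply/eqP.
  rewrite /g; field; rewrite gt_eqF //.
rewrite !big_split /= -!mulr_sumr ds mulr0 addr0 in Hub.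
have := le_trans Hle Hub; rewrite -/M /g /d /= => h; nra.
Qed.

Lemma forall4 (T : 'I_4 -> Prop) : T i1 -> T i2 -> T i3 -> T i4 -> forall i, T i.
Proof.
move=> h1 h2 h3 h4 [[|[|[|[|m]]]] hm] //.
- by have -> : Ordinal hm = i1 by apply: val_inj.
- by have -> : Ordinal hm = i2 by apply: val_inj.
- by have -> : Ordinal hm = i3 by apply: val_inj.
- by have -> : Ordinal hm = i4 by apply: val_inj.
Qed.

Lemma sum4 (R : realType) (F : 'I_4 -> R) :
  \sum_i F i = F i1 + F i2 + F i3 + F i4.
Proof.
rewrite !big_ord_recl big_ord0 addr0 !addrA.
have -> : (lift ord0 (lift ord0 (lift ord0 ord0)) : 'I_4) = i4 by apply: val_inj.
have -> : (lift ord0 (lift ord0 ord0) : 'I_4) = i3 by apply: val_inj.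
have -> : (lift ord0 ord0 : 'I_4) = i2 by apply: val_inj.
by have -> : (ord0 : 'I_4) = i1 by apply: val_inj.
Qed.

Lemma gp_unique (R : realType) n (P : 'I_4 -> 'I_n -> R) (a : 'I_4 -> R) :
  general_position P -> \sum_i a i = 0 -> (forall j, \sum_i a i * P i j = 0) ->
  forall i, a i = 0.
Proof.
move=> H Hs Hc.
have Hs' := Hs; rewrite big_ord_recl in Hs'.
have hb := H (fun k => a (lift ord0 k)).
have hz : forall k : 'I_3, a (lift ord0 k) = 0.
  apply: hb => j.
  have := Hc j; rewrite big_ord_recl => h.
  under eq_bigr do rewrite mulrBr.
  rewrite sumrB -mulr_suml.
  have e1 : \sum_(i < 3) a (lift ord0 i) = - a ord0 by lra.
  rewrite e1; lra.
move=> i; case: (unliftP ord0 i) => [k ->|->]; first exact: hz.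
have : \sum_(i < 3) a (lift ord0 i) = 0 by rewrite big1.
lra.
Qed.

Lemma comb_pos (R : realType) m n (P : 'I_m -> 'I_n -> R) mu :
  (forall i, in_simplex (P i)) -> in_csimplex mu -> forall j, 0 < comb P mu j.
Proof.
move=> HP [mu0 mus] j; rewrite lt_def; apply/andP; split; last first.
  by apply: sumr_ge0 => i _; rewrite mulr_ge0 // ltW // (HP i).1.
apply/negP => /eqP h.
have hge : forall i, predT i -> 0 <= mu i * P i j.
  by move=> i _; rewrite mulr_ge0 // ltW // (HP i).1.
have hm : forall i, mu i = 0.
  move=> i; have := psumr_eq0P hge h (i:=i) isT.
  by move/eqP; rewrite mulf_eq0 (gt_eqF ((HP i).1 j)) orbF => /eqP.
move: mus; rewrite big1 // => /eqP; rewrite eq_sym oner_eq0.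
done.
Qed.

Lemma comb_sum (R : realType) m n (P : 'I_m -> 'I_n -> R) mu :
  (forall i, in_simplex (P i)) -> \sum_j comb P mu j = \sum_i mu i.
Proof.
move=> HP; rewrite /comb exchange_big /=; apply: eq_bigr => i _.
by rewrite -mulr_sumr (HP i).2 mulr1.
Qed.

Lemma comb_mul (R : realType) m n (P : 'I_m -> 'I_n -> R) mu (g : 'I_n -> R) :
  \sum_j comb P mu j * g j = \sum_i mu i * \sum_j P i j * g j.
Proof.
rewrite /comb; under eq_bigr do rewrite mulr_suml.
rewrite exchange_big /=; apply: eq_bigr => i _; rewrite mulr_sumr.
by apply: eq_bigr => j _; rewrite mulrA.
Qed.

Lemma mutinf_dec (R : realType) m n (P : 'I_m -> 'I_n -> R) mu (Q : 'I_n -> R) :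
  (forall i, in_simplex (P i)) -> (forall j, 0 < Q j) -> (forall j, 0 < comb P mu j) ->
  mutinf P mu = \sum_i mu i * KL (P i) Q
     - \sum_j comb P mu j * (ln (comb P mu j) - ln (Q j)).
Proof.
move=> HP HQ Hc.
rewrite comb_mul /mutinf -sumrB; apply: eq_bigr => i _.
rewrite (KL_lnE (HP i).1 HQ) !mulr_sumr -sumrB; apply: eq_bigr => j _.
rewrite ln_div ?posrE ?(HP i).1 //; ring.
Qed.
Unset Implicit Arguments. Set Strict Implicit.

Theorem theorem20 (R : realType) (n : nat) (P : 'I_4 -> 'I_n -> R)
  (Q0 Q11 Q12 : 'I_n -> R) (l0 l11 l12 : 'I_4 -> R) :
  (forall i, in_simplex (P i)) ->
  general_position P ->
  equidistant P Q0 -> barycentric P Q0 l0 ->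
  l0 i1 < 0 -> l0 i2 < 0 -> 0 <= l0 i3 -> 0 <= l0 i4 ->
  is_proj (Laff P [set i2; i3; i4]%SET) Q0 Q11 ->
  is_proj (Laff P [set i1; i3; i4]%SET) Q0 Q12 ->
  barycentric P Q11 l11 -> barycentric P Q12 l12 ->
  l12 i1 < 0 ->
  0 <= l11 i2 -> 0 <= l11 i3 -> 0 <= l11 i4 ->
  (exists l, capacity_achieving P l) /\
  (forall l, capacity_achieving P l ->
     (forall j, comb P l j = Q11 j) /\ mutinf P l = KL (P i2) Q11).
Proof.
move=> HP Hgp [[[HQ0 HQ0s] _] Heq] [l0s l0c] l01 _ _ _ Hp11 _ [l11s l11c] _ _ h2 h3 h4.
have [[[HQ HQs] [l [lA [ls lc]]]] _] := Hp11.
have i2S : i2 \in [set i2; i3; i4]%SET by rewrite !inE eqxx.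
have i3S : i3 \in [set i2; i3; i4]%SET by rewrite !inE eqxx ?orbT.
have i4S : i4 \in [set i2; i3; i4]%SET by rewrite !inE eqxx ?orbT.
have i1S : i1 \notin [set i2; i3; i4]%SET by rewrite !inE.
have l111 : l11 i1 = 0.
  have := @gp_unique R n P (fun i => l11 i - l i) Hgp.
  rewrite sumrB l11s ls subrr => /(_ erefl) H.
  have := H _ i1; rewrite lA // subr0; apply=> j.
  under eq_bigr do rewrite mulrBl.
  by rewrite sumrB; have := l11c j; have := lc j; rewrite /comb => <- <-; rewrite subrr.
pose g := fun j => ln (Q11 j) - ln (Q0 j).
pose e := fun i => \sum_j P i j * g j.
have fo : forall i k, i \in [set i2; i3; i4]%SET -> k \in [set i2; i3; i4]%SET -> e k <= e i.
  move=> i k iS kS; have := first_order HP (conj HQ0 HQ0s) Hp11 iS kS.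
  rewrite (_ : \sum_j _ = e i - e k) ?subr_ge0 //.
  by rewrite /e -sumrB; apply: eq_bigr => j _; rewrite /g; ring.
have e23 := fo _ _ i2S i3S; have e32 := fo _ _ i3S i2S.
have e24 := fo _ _ i2S i4S; have e42 := fo _ _ i4S i2S.
have Q11g : \sum_j Q11 j * g j = e i2.
  rewrite (eq_bigr (fun j => comb P l11 j * g j)); last by move=> j _; rewrite -l11c.
  rewrite comb_mul sum4 -/(e _) -/(e _) -/(e _) -/(e _) l111 mul0r add0r.
  rewrite sum4 l111 add0r in l11s.
  have -> : e i3 = e i2 by lra.
  have -> : e i4 = e i2 by lra.
  have -> : l11 i4 = 1 - l11 i2 - l11 i3 by lra.
  ring.
have c0 : 0 <= e i2.
  by rewrite -Q11g; apply: gibbs => //; rewrite HQs HQ0s.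
have Q0g : \sum_j Q0 j * g j <= 0.
  have := gibbs HQ0 HQ (etrans HQ0s (esym HQs)).
  rewrite -oppr_le0 -sumrN => h; apply: le_trans h; rewrite le_eqVlt; apply/orP; left.
  by apply/eqP; apply: eq_bigr => j _; rewrite /g; ring.
have ac : e i2 <= e i1.
  rewrite (eq_bigr (fun j => comb P l0 j * g j)) in Q0g; last by move=> j _; rewrite -l0c.
  rewrite comb_mul sum4 -/(e _) -/(e _) -/(e _) -/(e _) in Q0g.
  rewrite sum4 in l0s.
  have e3 : e i3 = e i2 by lra.
  have e4 : e i4 = e i2 by lra.
  rewrite e3 e4 in Q0g.
  have e5 : l0 i4 = 1 - l0 i1 - l0 i2 - l0 i3 by lra.
  rewrite e5 in Q0g.
  nra.
have KLi : forall i, KL (P i) Q11 = KL (P i1) Q0 - e i.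
  move=> i; rewrite -(Heq i i1) (KL_lnE (HP i).1 HQ) (KL_lnE (HP i).1 HQ0) /e -sumrB.
  by apply: eq_bigr => j _; rewrite /g; ring.
set C := KL (P i2) Q11.
have Cd : C = KL (P i1) Q0 - e i2 by rewrite /C KLi.
have bound : forall mu, in_csimplex mu -> \sum_i mu i * KL (P i) Q11 <= C.
  move=> mu [mu0 mus]; rewrite sum4 !KLi Cd; rewrite sum4 in mus.
  have e3 : e i3 = e i2 by lra.
  have e4 : e i4 = e i2 by lra.
  rewrite e3 e4.
  have -> : mu i4 = 1 - mu i1 - mu i2 - mu i3 by lra.
  have := mu0 i1; nra.
have l11cs : in_csimplex l11.
  split => //; apply: forall4 => //; by rewrite l111.
have combl11 : forall j, comb P l11 j = Q11 j by move=> j; rewrite -l11c.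
have mut11 : mutinf P l11 = C.
  rewrite (mutinf_dec HP HQ (comb_pos HP l11cs)).
  under [X in _ - X]eq_bigr do rewrite combl11 subrr mulr0.
  rewrite big1_eq subr0 sum4 !KLi Cd l111 mul0r add0r.
  rewrite sum4 l111 add0r in l11s.
  have e3 : e i3 = e i2 by lra.
  have e4 : e i4 = e i2 by lra.
  rewrite e3 e4.
  have -> : l11 i4 = 1 - l11 i2 - l11 i3 by lra.
  ring.
have dec : forall mu, in_csimplex mu ->
   mutinf P mu = \sum_i mu i * KL (P i) Q11
     - \sum_j comb P mu j * (ln (comb P mu j) - ln (Q11 j)).
  by move=> mu hmu; apply: mutinf_dec => //; apply: comb_pos.
have K0 : forall mu, in_csimplex mu ->
   0 <= \sum_j comb P mu j * (ln (comb P mu j) - ln (Q11 j)).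
  move=> mu hmu; apply: gibbs => //; first exact: comb_pos.
  by rewrite comb_sum // hmu.2 HQs.
have cap : capacity_achieving P l11.
  split => // mu hmu; rewrite mut11 dec //.
  have := bound _ hmu; have := K0 _ hmu; lra.
split; first by exists l11.
move=> mu [hmu Hmax].
have ge := Hmax _ l11cs; rewrite mut11 in ge.
have := bound _ hmu; have := K0 _ hmu; have := dec _ hmu => dm b k.
split; last by rewrite -/C; lra.
apply: gibbs_eq => //; first exact: comb_pos.
  by rewrite comb_sum // hmu.2 HQs.
lra.
Qed.
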